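(* Assume (ER ra). Then $\sigma^+_{ra}:=-\sum_{j=1}^M\beta_j\mathrm{Tr}(\rho^{ra}_+\Phi_j)=0$ if and only if $U_j(\rho^{ra}_+\otimes\rho_{\mathcal E_j})U_j^*=\rho^{ra}_+\otimes\rho_{\mathcal E_j}$ for all $j\in\{1,\dots,M\}$; in that case in particular $\mathcal L_j(\rho^{ra}_+)=\rho^{ra}_+$ for all $j$.
   Context: Finite-dimensional $\mathcal H_{\mathcal S},\mathcal H_{\mathcal E_j}$ ($j=1..M$), self-adjoint $H_{\mathcal S},H_{\mathcal E_j}$, self-adjoint $V_j$ on $\mathcal H_{\mathcal S}\otimes\mathcal H_{\mathcal E_j}$, $\tau_j>0$, $T=\sum\tau_j$, $U_j=e^{-i\tau_j(H_{\mathcal S}\otimes\mathrm{Id}+\mathrm{Id}\otimes H_{\mathcal E_j}+V_j)}$. Fixed inverse temperatures $\beta_j$ (of the form $\beta_{\rm ref}-\zeta_j$, $\boldsymbol\zeta\in\mathbb R^M$), $\rho_{\mathcal E_j}=e^{-\beta_jH_{\mathcal E_j}}/\mathrm{Tr}(e^{-\beta_jH_{\mathcal E_j}})$, $\mathcal L_j(\rho)=\mathrm{Tr}_{\mathcal H_{\mathcal E_j}}(U_j(\rho\otimes\rho_{\mathcal E_j})U_j^* )$, $\mathcal L_{ra}=\frac1M\sum_j\mathcal L_j$. Primitive CP map: for some $n$, products of $n$ Kraus operators span all operators. (ER ra): $\mathcal L_{ra}$ is primitive for some choice of $\boldsymbol\zeta$ (equivalently, for all); $\rho^{ra}_+$ denotes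 the unique invariant state of $\mathcal L_{ra}$. Flux observable $\Phi_j=-\frac1T\mathrm{Tr}_{\mathcal H_{\mathcal E_j}}((\mathrm{Id}\otimes\rho_{\mathcal E_j})(U_j^*(\mathrm{Id}\otimes H_{\mathcal E_j})U_j-\mathrm{Id}\otimes H_{\mathcal E_j}))$. *)

(* Defs.v *)
From HB Require Import structures.
From mathcomp Require Import all_boot all_order all_algebra.
From mathcomp Require Import all_classical all_reals all_analysis.
From mathcomp Require Import complex mxtens.

Set Implicit Arguments.
Unset Strict Implicit.
Unset Printing Implicit Defensive.

Import Order.TTheory GRing.Theory Num.Theory.
Local Open Scope ring_scope.
Local Open Scope complex_scope.

Section QuantumDefs.
Variable R : realType.
Local Notation C := R[i].

Definition adjmx m n (A : 'M[C]_(m, n)) : 'M[C]_(n, m) := (map_mx conjc A)^T.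

Definition selfadjoint n (A : 'M[C]_n) : Prop := adjmx A = A.

Definition psdmx n (A : 'M[C]_n) : Prop :=
  selfadjoint A /\ forall v : 'cV[C]_n, 0 <= (adjmx v *m A *m v) 0 0.

Definition density n (rho : 'M[C]_n) : Prop := psdmx rho /\ \tr rho = 1.

Definition expmx n (A : 'M[C]_n) : 'M[C]_n :=
  limn (series (fun k : nat => (k`!%:R)^-1 *: A ^+ k)).

(* partial trace over the second tensor factor of C^m (x) C^n, with the
   Kronecker indexing convention of [tensmx] ((i,j) |-> i*n + j) *)
Definition ptrace2 m n (X : 'M[C]_(m * n)) : 'M[C]_m :=
  \matrix_(i < m, k < m) \sum_(l < n) X (mxtens_index (i, l)) (mxtens_index (k, l)).

Definition gibbs n (beta : R) (H : 'M[C]_n) : 'M[C]_n :=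
  (\tr (expmx (- beta%:C *: H)))^-1 *: expmx (- beta%:C *: H).

Definition Uint dS dE (HS : 'M[C]_dS) (HE : 'M[C]_dE) (V : 'M[C]_(dS * dE))
  (tau : R) : 'M[C]_(dS * dE) :=
  expmx (- ('i * tau%:C) *: (HS *t (1%:M : 'M[C]_dE) + (1%:M : 'M[C]_dS) *t HE + V)).

Definition Lrep dS dE (HS : 'M[C]_dS) (HE : 'M[C]_dE) (V : 'M[C]_(dS * dE))
  (tau beta : R) (rho : 'M[C]_dS) : 'M[C]_dS :=
  let U := Uint HS HE V tau in
  ptrace2 (U *m (rho *t gibbs beta HE) *m adjmx U).

Definition Lra (M dS : nat) (dE : 'I_M -> nat) (HS : 'M[C]_dS)
  (HE : forall j, 'M[C]_(dE j)) (V : forall j, 'M[C]_(dS * dE j))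
  (tau beta : 'I_M -> R) (rho : 'M[C]_dS) : 'M[C]_dS :=
  (M%:R)^-1 *: \sum_(j < M) Lrep HS (HE j) (V j) (tau j) (beta j) rho.

Definition flux dS dE (HS : 'M[C]_dS) (HE : 'M[C]_dE) (V : 'M[C]_(dS * dE))
  (tau beta T : R) : 'M[C]_dS :=
  let U := Uint HS HE V tau in
  let IHE := (1%:M : 'M[C]_dS) *t HE in
  - (T%:C)^-1 *: ptrace2 (((1%:M : 'M[C]_dS) *t gibbs beta HE)
                            *m (adjmx U *m IHE *m U - IHE)).

(* primitive CP map: it has a Kraus representation L(X) = sum_a K_a X K_a^*
   and for some n the products of n Kraus operators span all operators *)
Definition primitive d (L : 'M[C]_d -> 'M[C]_d) : Prop :=
  exists (r : nat) (K : 'I_r -> 'M[C]_d),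
    (forall X, L X = \sum_(a < r) K a *m X *m adjmx (K a)) /\
    exists n : nat, forall X : 'M[C]_d,
      exists c : n.-tuple 'I_r -> C,
        X = \sum_(s : n.-tuple 'I_r) c s *: \prod_(a <- s) K a.

End QuantumDefs.

(* Main.v *)
Require Import Defs.
From HB Require Import structures.
From mathcomp Require Import all_boot all_order all_algebra.
From mathcomp Require Import all_classical all_reals all_analysis.
From mathcomp Require Import complex mxtens.
From mathcomp Require Import spectral sesquilinear.
From mathcomp Require Import ring lra.
Import Order.TTheory GRing.Theory Num.Theory.
Local Open Scope ring_scope.
Local Open Scope complex_scope.
Set Implicit Arguments.
Unset Strict Implicit.
Unset Printing Implicit Defensive.

Import numFieldTopology.Exports.
HB.instance Definition _ (R : realType) := PseudoPointedMetric.copy R[i] (R[i]^o).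
HB.instance Definition _ (R : realType) := GRing.ComAlgebra.copy R[i] (R[i]^o).
HB.instance Definition _ (R : realType) := Vector.copy R[i] (R[i]^o).
HB.instance Definition _ (R : realType) := NormedModule.copy R[i] (R[i]^o).
Local Open Scope classical_set_scope.
Section Q.
Variable R : realType.
Local Notation C := R[i].


Lemma adjmxE m n (A : 'M[C]_(m,n)) : adjmx A = (A ^t* )%sesqui.
Proof. by apply/matrixP=> i j; rewrite !mxE. Qed.

Lemma adjmxK m n (A : 'M[C]_(m,n)) : adjmx (adjmx A) = A.
Proof. by apply/matrixP=> i j; rewrite !mxE conjcK. Qed.

Lemma adjmxM m n p (A : 'M[C]_(m,n)) (B : 'M[C]_(n,p)) :
  adjmx (A *m B) = adjmx B *m adjmx A.
Proof. by rewrite /adjmx map_mxM trmx_mul. Qed.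

Lemma adjmxD m n (A B : 'M[C]_(m,n)) : adjmx (A + B) = adjmx A + adjmx B.
Proof. by apply/matrixP=> i j; rewrite !mxE rmorphD. Qed.

Lemma adjmxB m n (A B : 'M[C]_(m,n)) : adjmx (A - B) = adjmx A - adjmx B.
Proof. by apply/matrixP=> i j; rewrite !mxE rmorphB. Qed.

Lemma adjmxZ m n a (A : 'M[C]_(m,n)) : adjmx (a *: A) = conjc a *: adjmx A.
Proof. by apply/matrixP=> i j; rewrite !mxE rmorphM. Qed.

Lemma adjmx1 n : adjmx (1%:M : 'M[C]_n) = 1%:M.
Proof. by rewrite /adjmx map_mx1 trmx1. Qed.

Lemma adjmx_diag n (d : 'rV[C]_n) : adjmx (diag_mx d) = diag_mx (map_mx conjc d).
Proof.
apply/matrixP=> i j; rewrite !mxE rmorphMn eq_sym.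
by case: eqVneq => [->|] //=; rewrite !mxE.
Qed.

Lemma adjmx_tens m n p q (A : 'M[C]_(m,n)) (B : 'M[C]_(p,q)) :
  adjmx (A *t B) = adjmx A *t adjmx B.
Proof. by rewrite /adjmx map_mxT trmx_tens. Qed.

Definition unitary n (W : 'M[C]_n) := W *m adjmx W = 1%:M /\ adjmx W *m W = 1%:M.

Definition spW n (A : 'M[C]_n) : 'M[C]_n := adjmx (spectralmx A).
Definition spd n (A : 'M[C]_n) (k : 'I_n) : R := complex.Re (spectral_diag A 0 k).

Lemma spectral_herm_ex n (A : 'M[C]_n) : selfadjoint A ->
  unitary (spW A) /\ A = spW A *m diag_mx (\row_k (spd A k)%:C) *m adjmx (spW A).
Proof.
move=> hA.
have Ah : A \is hermsymmx.
  apply/is_hermitianmxP; rewrite expr0 scale1r -adjmxE; exact/esym.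
have /hermitian_normalmx /orthomx_spectralP Aeq := Ah.
have Pu := spectral_unitarymx A.
have dreal := hermitian_spectral_diag_real Ah.
rewrite /spW /spd.
set P := spectralmx A in Aeq Pu *.
split.
  rewrite /unitary adjmxK; split; last by rewrite adjmxE; exact/unitarymxP.
  by rewrite adjmxE -(invmx_unitary Pu) (mulVmx (unitarymx_unit Pu)).
have -> : (\row_k (complex.Re (spectral_diag A 0 k))%:C) = spectral_diag A.
  apply/rowP => k; rewrite mxE.
  by have /RRe_real := mxOverP dreal 0 k.
by rewrite adjmxK {1}Aeq (invmx_unitary Pu) -adjmxE.
Qed.

Lemma spectral_herm n (A : 'M[C]_n) : selfadjoint A ->
  exists (W : 'M[C]_n) (d : 'I_n -> R), unitary W /\
    A = W *m diag_mx (\row_k (d k)%:C) *m adjmx W.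
Proof. by move=> /spectral_herm_ex h; exists (spW A), (spd A). Qed.



Lemma mx_cvg_entries m n (f : nat -> 'M[C]_(m,n)) (L : 'M[C]_(m,n)) :
  (forall i j, (fun k => f k i j) @ \oo --> L i j) -> f @ \oo --> L.
Proof.
move=> H A [P /= HP sPA].
have H2 i : \forall k \near \oo, forall j, P i j (f k i j).
  by apply: filter_forall => j; exact: (H i j _ (HP i j)).
have H3 : \forall k \near \oo, forall i j, P i j (f k i j) by apply: filter_forall.
change (\oo (f @^-1` A)).
by apply: filterS H3 => k Hk; apply: sPA.
Qed.

Lemma conj_diag_entry m n p (W : 'M[C]_(m,n)) (v : 'rV[C]_n) (W' : 'M[C]_(n,p)) i j :
  (W *m diag_mx v *m W') i j = \sum_l W i l * v 0 l * W' l j.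
Proof. by rewrite mxE; apply: eq_bigr => l _; rewrite mul_mx_diag mxE. Qed.

Lemma unitary_pow n (W : 'M[C]_n) (d : 'I_n -> C) k : unitary W ->
  (W *m diag_mx (\row_l d l) *m adjmx W) ^+ k
  = W *m diag_mx (\row_l d l ^+ k) *m adjmx W.
Proof.
move=> [WW1 W1W]; elim: k => [|k IH].
  have -> : (\row_l d l ^+ 0) = const_mx 1 by apply/rowP => l; rewrite !mxE expr0.
  by rewrite expr0 diag_const_mx mulmx1 WW1.
rewrite exprS IH -mulmxE !mulmxA -[_ *m adjmx W *m W]mulmxA W1W mulmx1.
rewrite -[W *m _ *m _]mulmxA mulmx_diag; congr (_ *m diag_mx _ *m _).
by apply/rowP => l; rewrite !mxE exprS.
Qed.

Lemma expmx_diag n (W : 'M[C]_n) (d e : 'I_n -> C) : unitary W ->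
  (forall l, series (fun m => (m`!%:R)^-1 * d l ^+ m) @ \oo --> e l) ->
  expmx (W *m diag_mx (\row_l d l) *m adjmx W) = W *m diag_mx (\row_l e l) *m adjmx W.
Proof.
move=> Wu He; rewrite /expmx; apply: cvg_lim => //.
apply: mx_cvg_entries => i j.
have -> : (fun k => series (fun m => (m`!%:R)^-1 *: (W *m diag_mx (\row_l d l) *m adjmx W) ^+ m) k i j)
  = (fun k => \sum_l W i l * series (fun m => (m`!%:R)^-1 * d l ^+ m) k * adjmx W l j).
  apply: funext => k; rewrite !seriesEnat summxE.
  under eq_bigr => m _ do rewrite (unitary_pow d m Wu) mxE conj_diag_entry mulr_sumr.
  rewrite exchange_big /=; apply: eq_bigr => l _.
  rewrite mulr_sumr mulr_suml; apply: eq_bigr => m _; rewrite mxE; ring.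
rewrite conj_diag_entry.
apply: cvg_big => //; first exact: add_continuous.
move=> l _; rewrite mxE; apply: cvgMr_tmp; apply: cvgMl_tmp; exact: He.
Qed.
End Q.

Section Q.
Variable R : realType.
Local Notation C := R[i].

Lemma normC_real (x : R) : `|x%:C| = `|x|%:C.
Proof. by rewrite normc_def /= expr0n /= addr0 sqrtr_sqr. Qed.

Lemma cvg_realC (u : nat -> R) (a : R) : u @ \oo --> a -> (fun n => (u n)%:C) @ \oo --> a%:C.
Proof.
move=> /cvgrPdist_lt H; apply/cvgrPdist_lt => eps eps0.
have eR : eps = (complex.Re eps)%:C.
  case: eps eps0 => a' b; rewrite ltcE /= => /andP[/eqP h _].
  by apply/eqP; rewrite eq_complex /= eqxx h eqxx.
have e0 : 0 < complex.Re eps by move: eps0; rewrite eR ltcR.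
near=> n; rewrite -rmorphB /= normC_real eR ltcR.
near: n; exact: H.
Unshelve. all: by end_near. Qed.

Lemma cvg_complex (u v : nat -> R) (a b : R) : u @ \oo --> a -> v @ \oo --> b ->
  (fun n => (u n)%:C + 'i * (v n)%:C) @ \oo --> a%:C + 'i * b%:C.
Proof.
move=> /cvg_realC hu /cvg_realC hv.
have hv' : (fun x => 'i * (v x)%:C) @ \oo --> 'i * b%:C by apply: cvgMl_tmp.
exact: (@cvgD _ _ _ _ _ _ _ _ _ hu hv').
Qed.

Lemma exp_series_real (x : R) :
  series (fun m => (m`!%:R)^-1 * (x%:C)^+m) @ \oo --> (expR x)%:C.
Proof.
have -> : series (fun m => (m`!%:R)^-1 * (x%:C)^+m)
  = fun N => (series (exp_coeff x) N)%:C.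
  apply: funext => N; rewrite !seriesEnat /= rmorph_sum; apply: eq_bigr => m _.
  by rewrite /exp_coeff /= rmorphM fmorphV rmorphXn rmorph_nat mulrC.
apply: cvg_realC; exact: is_cvg_series_exp_coeff.
Qed.

Lemma i_pow m : ('i : C) ^+ m = (~~ odd m)%:R * ((-1) ^+ m./2) + 'i * ((odd m)%:R * (-1) ^+ m./2).
Proof.
rewrite -{1}(odd_double_half m) exprD -mul2n exprM sqr_i.
by case: (odd m) => /=; rewrite ?expr1 ?expr0; ring.
Qed.

Lemma cis_series (y : R) :
  series (fun m => (m`!%:R)^-1 * ('i * y%:C)^+m) @ \oo
    --> (cos y)%:C + 'i * (sin y)%:C.
Proof.
have -> : series (fun m => (m`!%:R)^-1 * ('i * y%:C)^+m)
  = fun N => (series (cos_coeff y) N)%:C + 'i * (series (sin_coeff y) N)%:C.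
  apply: funext => N; rewrite !seriesEnat /= !rmorph_sum mulr_sumr -big_split /=.
  apply: eq_bigr => m _.
  rewrite /cos_coeff /sin_coeff /= exprMn i_pow.
  have hm : odd m -> m.-1./2 = m./2.
    by move=> om; rewrite -{1}(odd_double_half m) om add1n succnK doubleK.
  case om : (odd m) => /=.
    rewrite hm // !rmorphM !fmorphV !rmorphXn !rmorph_nat rmorphN rmorph1 /=; ring.
  rewrite !rmorphM !fmorphV !rmorphXn !rmorph_nat rmorphN rmorph1 /=; ring.
apply: cvg_complex.
  rewrite unlock; exact: is_cvg_series_cos_coeff.
rewrite unlock; exact: is_cvg_series_sin_coeff.
Qed.

Lemma cis_norm (y : R) :
  ((cos y)%:C + 'i * (sin y)%:C) * conjc ((cos y)%:C + 'i * (sin y)%:C) = 1.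
Proof.
apply/eqP; rewrite eq_complex /=; apply/andP; split; apply/eqP; last by ring.
rewrite -[in RHS](cos2Dsin2 y); ring.
Qed.

End Q.

Section Q.
Variable R : realType.
Local Notation C := R[i].

Lemma scale_conj n (W W' : 'M[C]_n) (d : 'I_n -> C) a :
  a *: (W *m diag_mx (\row_l d l) *m W') = W *m diag_mx (\row_l (a * d l)) *m W'.
Proof.
apply/matrixP => i j; rewrite mxE !conj_diag_entry mulr_sumr.
by apply: eq_bigr => l _; rewrite !mxE; ring.
Qed.

Lemma adj_conj n (W : 'M[C]_n) (d : 'I_n -> C) :
  adjmx (W *m diag_mx (\row_l d l) *m adjmx W) = W *m diag_mx (\row_l conjc (d l)) *m adjmx W.
Proof.
rewrite !adjmxM adjmxK adjmx_diag mulmxA; congr (_ *m diag_mx _ *m _).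
by apply/rowP => l; rewrite !mxE.
Qed.

Lemma conj_mul n (W : 'M[C]_n) (d e : 'I_n -> C) : unitary W ->
  (W *m diag_mx (\row_l d l) *m adjmx W) *m (W *m diag_mx (\row_l e l) *m adjmx W)
  = W *m diag_mx (\row_l (d l * e l)) *m adjmx W.
Proof.
move=> [_ W1W]; rewrite !mulmxA -[_ *m adjmx W *m W]mulmxA W1W mulmx1.
rewrite -[W *m _ *m _]mulmxA mulmx_diag; congr (_ *m diag_mx _ *m _).
by apply/rowP => l; rewrite !mxE.
Qed.

Lemma conj_one n (W : 'M[C]_n) (d : 'I_n -> C) : unitary W ->
  (forall l, d l = 1) -> W *m diag_mx (\row_l d l) *m adjmx W = 1%:M.
Proof.
move=> [WW _] hd.
have -> : (\row_l d l) = const_mx 1 by apply/rowP => l; rewrite !mxE hd.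
by rewrite diag_const_mx mulmx1 WW.
Qed.

Lemma unitary_diag n (W : 'M[C]_n) (e : 'I_n -> C) : unitary W ->
  (forall l, e l * conjc (e l) = 1) ->
  unitary (W *m diag_mx (\row_l e l) *m adjmx W).
Proof.
move=> Wu he; rewrite /unitary adj_conj !conj_mul //; split; apply: conj_one => // l.
by rewrite mulrC.
Qed.

Lemma selfadjoint_K dS dE (HS : 'M[C]_dS) (HE : 'M[C]_dE) (V : 'M[C]_(dS * dE)) :
  selfadjoint HS -> selfadjoint HE -> selfadjoint V ->
  selfadjoint (HS *t (1%:M : 'M[C]_dE) + (1%:M : 'M[C]_dS) *t HE + V).
Proof.
move=> h1 h2 h3; rewrite /selfadjoint !adjmxD !adjmx_tens !adjmx1.
by rewrite h1 h2 h3.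
Qed.

Lemma Uint_unitary dS dE (HS : 'M[C]_dS) (HE : 'M[C]_dE) (V : 'M[C]_(dS * dE)) tau :
  selfadjoint HS -> selfadjoint HE -> selfadjoint V ->
  unitary (Uint HS HE V tau).
Proof.
move=> h1 h2 h3; have [W [d [Wu KE]]] := spectral_herm (selfadjoint_K h1 h2 h3).
rewrite /Uint KE scale_conj.
have -> : (\row_l (- ('i * tau%:C) * (d l)%:C)) = \row_l ('i * (- (tau * d l))%:C).
  by apply/rowP => l; rewrite !mxE rmorphN rmorphM /=; ring.
rewrite (@expmx_diag _ _ W _ (fun l => (cos (- (tau * d l)))%:C + 'i * (sin (- (tau * d l)))%:C)) //.
  apply: unitary_diag => // l; exact: cis_norm.
move=> l; exact: cis_series.
Qed.

Lemma gibbs_form n (H : 'M[C]_n) (beta : R) : selfadjoint H ->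
  let W := spW H in let h := spd H in
  unitary W /\
    H = W *m diag_mx (\row_l (h l)%:C) *m adjmx W /\
    gibbs beta H = W *m diag_mx (\row_l (expR (- beta * h l) / \sum_k expR (- beta * h k))%:C) *m adjmx W.
Proof.
move=> hH W h; have [Wu HE] := spectral_herm_ex hH.
split => //; split => //.
have EE : expmx (- beta%:C *: H) = W *m diag_mx (\row_l (expR (- beta * h l))%:C) *m adjmx W.
  rewrite HE scale_conj.
  have -> : (\row_l (- beta%:C * (h l)%:C)) = \row_l ((- beta * h l)%:C).
    by apply/rowP => l; rewrite !mxE rmorphM rmorphN.
  apply: expmx_diag => // l; exact: exp_series_real.
rewrite /gibbs EE mxtrace_mulC mulmxA (proj2 Wu) mul1mx mxtrace_diag scale_conj.
congr (_ *m diag_mx _ *m _); apply/rowP => l; rewrite !mxE.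
under eq_bigr do rewrite mxE.
by rewrite -rmorph_sum -fmorphV -rmorphM /= mulrC.
Qed.

End Q.

Lemma sum_tens (V : nmodType) m n (F : 'I_(m * n) -> V) :
  \sum_c F c = \sum_(i < m) \sum_(k < n) F (mxtens_index (i, k)).
Proof.
rewrite pair_big /= (reindex (@mxtens_index m n)) /=.
  by apply: eq_bigr => -[i k].
by exists (@mxtens_unindex m n) => x _; rewrite (mxtens_indexK, mxtens_unindexK).
Qed.

Section Core.
Variable R : realType.

Definition phi (s t : R) := s * (ln s - ln t) - s + t.

Lemma phi_pos s t : 0 <= s -> 0 < t -> 0 <= phi s t /\ (phi s t = 0 -> s = t).
Proof.
move=> s0 t0; rewrite /phi.
have [->|sp] := eqVneq s 0.
  rewrite !mul0r subr0 add0r; split; first exact: ltW.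
  by move=> t0'; rewrite t0' in t0; rewrite ltxx in t0.
have {sp}sp : 0 < s by rewrite lt_def sp.
set x := t / s.
have xp : 0 < x by rewrite divr_gt0.
have tE : t = s * x by rewrite /x mulrC divfK // gt_eqF.
have lnx : ln x = ln t - ln s by rewrite /x ln_div // posrE.
have E : s * (ln s - ln t) - s + t = s * (x - 1 - ln x) by rewrite lnx tE; ring.
have le1 : 1 + ln x <= x by have := expR_ge1Dx (ln x); rewrite lnK // posrE.
rewrite E; split.
  by apply: mulr_ge0; [exact: ltW | lra].
move/eqP; rewrite mulf_eq0 gt_eqF //= => /eqP h.
have lx0 : ln x = 0.
  apply/eqP; apply/negPn/negP => hx.
  have := expR_gt1Dx hx; rewrite lnK ?posrE // => lt1; lra.
have /eqP x1 : x == 1 by rewrite -ln_eq0 // lx0.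
by rewrite tE x1 mulr1.
Qed.

Lemma term_pos g s t : 0 <= g -> 0 <= s -> 0 <= t -> (t = 0 -> g * s = 0) ->
  0 <= g * phi s t /\ (0 < g -> g * phi s t = 0 -> s = t).
Proof.
move=> g0 s0 t0 ht.
have [t00|tp] := eqVneq t 0.
  have /eqP := ht t00; rewrite mulf_eq0 => /orP[/eqP ->|/eqP s00].
    by rewrite mul0r; split => //; rewrite ltxx.
  rewrite s00 t00 /phi !mul0r subr0 addr0 mulr0; split => //.
have {tp}tp : 0 < t by rewrite lt_def tp.
have [p1 p2] := phi_pos s0 tp.
split; first exact: mulr_ge0.
move=> gp /eqP; rewrite mulf_eq0 gt_eqF //= => /eqP; exact: p2.
Qed.


Lemma core M dS (dE : 'I_M -> nat) (p : 'I_dS -> R) (q : forall j, 'I_(dE j) -> R)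
  (Z beta : 'I_M -> R) (h : forall j, 'I_(dE j) -> R)
  (gg : forall j, 'I_(dS * dE j) -> 'I_(dS * dE j) -> R) :
  (forall i, 0 <= p i) -> (forall j k, 0 < q j k) -> (forall j, \sum_k q j k = 1) ->
  (forall j k, beta j * h j k = - ln (q j k) - ln (Z j)) ->
  (forall j c a, 0 <= gg j c a) ->
  (forall j c, \sum_a gg j c a = 1) -> (forall j a, \sum_c gg j c a = 1) ->
  let bb j (c : 'I_(dS * dE j)) := p (mxtens_unindex c).1 * q j (mxtens_unindex c).2 in
  let ww j c := \sum_a gg j c a * bb j a in
  (forall i, \sum_j \sum_k ww j (mxtens_index (i, k)) = M%:R * p i) ->
  \sum_j beta j * (\sum_c (ww j c - bb j c) * h j (mxtens_unindex c).2) = 0 ->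
  forall j c a, 0 < gg j c a -> bb j a = bb j c.
Proof.
move=> p0 q0 q1 lnq g0 grow gcol bb ww Hsum Hsig.
have bb0 j c : 0 <= bb j c by apply: mulr_ge0 => //; exact: ltW.
have ww0 j c : 0 <= ww j c by apply: sumr_ge0 => a _; exact: mulr_ge0.
have sup j c : p (mxtens_unindex c).1 = 0 -> ww j c = 0.
  move=> pi0; have := Hsum (mxtens_unindex c).1; rewrite pi0 mulr0 => /eqP.
  rewrite psumr_eq0; last by move=> j' _; apply: sumr_ge0 => k _.
  move=> /allP /(_ j (mem_index_enum _)) /implyP /(_ isT) /eqP.
  move/eqP; rewrite psumr_eq0 //; move=> /allP /(_ (mxtens_unindex c).2 (mem_index_enum _)).
  by rewrite implyTb -surjective_pairing mxtens_unindexK => /eqP.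
have sup2 j c a : bb j c = 0 -> gg j c a * bb j a = 0.
  move=> /eqP; rewrite /bb mulf_eq0 (gt_eqF (q0 _ _)) orbF => /eqP /(sup j c) /eqP.
  rewrite /ww psumr_eq0; last by move=> a' _; exact: mulr_ge0.
  by move=> /allP /(_ a (mem_index_enum _)) /implyP /(_ isT) /eqP.
pose D j := \sum_c \sum_a gg j c a * phi (bb j a) (bb j c).
have Dge0 j : 0 <= D j.
  apply: sumr_ge0 => c _; apply: sumr_ge0 => a _.
  by case: (term_pos (g0 j c a) (bb0 j a) (bb0 j c) (sup2 j c a)).
have Dform j : D j = \sum_c (bb j c - ww j c) * ln (bb j c).
  have E c a : gg j c a * phi (bb j a) (bb j c) = gg j c a * (bb j a * ln (bb j a) - bb j a)
     + gg j c a * bb j c - gg j c a * bb j a * ln (bb j c) by rewrite /phi; ring.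
  rewrite /D; under eq_bigr do under eq_bigr do rewrite E.
  under eq_bigr do rewrite sumrB big_split /=.
  rewrite sumrB big_split /= exchange_big /=.
  under eq_bigr do rewrite -mulr_suml gcol mul1r.
  under [X in _ + X - _]eq_bigr do rewrite -mulr_suml grow mul1r.
  under [X in _ - X]eq_bigr do rewrite -mulr_suml.
  rewrite sumrB (eq_bigr (fun c => bb j c * ln (bb j c) - ww j c * ln (bb j c)) (F1 := fun c => (bb j c - ww j c) * ln (bb j c))); last by move=> c _; ring.
  rewrite sumrB /ww; ring.
have Dsplit j c : (bb j c - ww j c) * ln (bb j c)
   = (bb j c - ww j c) * ln (p (mxtens_unindex c).1) + (bb j c - ww j c) * ln (q j (mxtens_unindex c).2).
  have [pz|pnz] := eqVneq (p (mxtens_unindex c).1) 0.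
    by rewrite (sup j c pz) /bb pz !mul0r subr0 !mul0r addr0.
  have pp : 0 < p (mxtens_unindex c).1 by rewrite lt_def pnz p0.
  by rewrite -mulrDr /bb lnM // posrE.
have sumww j : \sum_c ww j c = \sum_c bb j c.
  rewrite /ww exchange_big /=; apply: eq_bigr => a _; by rewrite -mulr_suml gcol mul1r.
have Dq j : \sum_c (bb j c - ww j c) * ln (q j (mxtens_unindex c).2)
   = beta j * (\sum_c (ww j c - bb j c) * h j (mxtens_unindex c).2).
  have E c : (bb j c - ww j c) * ln (q j (mxtens_unindex c).2)
    = beta j * ((ww j c - bb j c) * h j (mxtens_unindex c).2) + ln (Z j) * (ww j c - bb j c).
    have := lnq j (mxtens_unindex c).2 => hl.
    have -> : ln (q j (mxtens_unindex c).2) = - (beta j * h j (mxtens_unindex c).2) - ln (Z j) by lra.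
    ring.
  under eq_bigr do rewrite E.
  by rewrite big_split /= -mulr_sumr -mulr_sumr sumrB sumww subrr mulr0 addr0.
have Dp : \sum_j \sum_c (bb j c - ww j c) * ln (p (mxtens_unindex c).1) = 0.
  under eq_bigr do rewrite sum_tens.
  rewrite exchange_big big1 // => i _.
  under eq_bigr do under eq_bigr do rewrite mxtens_indexK /=.
  under eq_bigr do rewrite -mulr_suml sumrB.
  rewrite -mulr_suml sumrB Hsum.
  have -> : \sum_j \sum_k bb j (mxtens_index (i, k)) = M%:R * p i.
    under eq_bigr do under eq_bigr do rewrite /bb mxtens_indexK /=.
    under eq_bigr do rewrite -mulr_sumr q1 mulr1.
    by rewrite sumr_const card_ord mulr_natl.
  by rewrite subrr mul0r.
have Dsum : \sum_j D j = 0.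
  under eq_bigr do rewrite Dform.
  under eq_bigr do (under eq_bigr do rewrite Dsplit; rewrite big_split /= Dq).
  by rewrite big_split /= Dp add0r.
move=> j c a gp.
have /eqP := Dsum; rewrite psumr_eq0; last by move=> j' _; exact: Dge0.
move=> /allP /(_ j (mem_index_enum _)) /implyP /(_ isT) /eqP.
move/eqP; rewrite psumr_eq0; last first.
  move=> c' _; apply: sumr_ge0 => a' _.
  by case: (term_pos (g0 j c' a') (bb0 j a') (bb0 j c') (sup2 j c' a')).
move=> /allP /(_ c (mem_index_enum _)) /implyP /(_ isT) /eqP.
move/eqP; rewrite psumr_eq0; last first.
  move=> a' _.
  by case: (term_pos (g0 j c a') (bb0 j a') (bb0 j c) (sup2 j c a')).
move=> /allP /(_ a (mem_index_enum _)) /implyP /(_ isT) /eqP.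
by case: (term_pos (g0 j c a) (bb0 j a) (bb0 j c) (sup2 j c a)) => _; apply.
Qed.

End Core.

Section Q.
Variable R : realType.
Local Notation C := R[i].

Lemma mxtens_index_eq m n (i i' : 'I_m) (k k' : 'I_n) :
  (mxtens_index (i, k) == mxtens_index (i', k')) = (i == i') && (k == k').
Proof. by rewrite (can_eq (@mxtens_indexK m n)) xpair_eqE. Qed.

Lemma tens_diag m n (u : 'I_m -> C) (v : 'I_n -> C) :
  diag_mx (\row_l u l) *t diag_mx (\row_l v l)
  = diag_mx (\row_c (u (mxtens_unindex c).1 * v (mxtens_unindex c).2)) :> 'M[C]_(m * n).
Proof.
apply/matrixP => x y.
case: (mxtens_indexP x) => i k; case: (mxtens_indexP y) => i' k'.
rewrite tensmxE !mxE mxtens_index_eq mxtens_indexK /=.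
by case: eqP => _; case: eqP => _ /=; rewrite ?mulr1n ?mulr0n ?mulr0 ?mul0r.
Qed.

Lemma tens_conj m n (A : 'M[C]_m) (B : 'M[C]_n) (a : 'I_m -> C) (b : 'I_n -> C) :
  (A *m diag_mx (\row_l a l) *m adjmx A) *t (B *m diag_mx (\row_l b l) *m adjmx B)
  = (A *t B) *m diag_mx (\row_c (a (mxtens_unindex c).1 * b (mxtens_unindex c).2))
     *m adjmx (A *t B).
Proof. by rewrite -tens_diag adjmx_tens !tensmx_mul. Qed.

Lemma tens11 m n : (1%:M : 'M[C]_m) *t (1%:M : 'M[C]_n) = 1%:M.
Proof.
apply/matrixP => x y.
case: (mxtens_indexP x) => i k; case: (mxtens_indexP y) => i' k'.
rewrite tensmxE !mxE mxtens_index_eq.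
by case: eqP => _; case: eqP => _ /=; rewrite ?mulr1n ?mulr0n ?mulr0 ?mul0r ?mulr1.
Qed.

Lemma unitary_tens m n (A : 'M[C]_m) (B : 'M[C]_n) :
  unitary A -> unitary B -> unitary (A *t B).
Proof.
move=> [A1 A2] [B1 B2]; rewrite /unitary adjmx_tens !tensmx_mul A1 A2 B1 B2.
by rewrite tens11.
Qed.

Definition sq (z : C) : R := complex.Re z ^+ 2 + complex.Im z ^+ 2.

Lemma sqE (z : C) : z * conjc z = (sq z)%:C.
Proof. case: z => a b; apply/eqP; rewrite /sq eq_complex /=; apply/andP; split; apply/eqP; ring. Qed.

Lemma sq_ge0 z : 0 <= sq z.
Proof. by rewrite /sq addr_ge0 // sqr_ge0. Qed.

Lemma sq_eq0 z : sq z = 0 -> z = 0.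
Proof.
case: z => a b; rewrite /sq /= => h.
have ha : a ^+ 2 = 0 by apply/eqP; rewrite eq_le sqr_ge0 andbT -h lerDl sqr_ge0.
have hb : b ^+ 2 = 0 by apply/eqP; rewrite eq_le sqr_ge0 andbT -h lerDr sqr_ge0.
by move: ha hb => /eqP; rewrite sqrf_eq0 => /eqP -> /eqP; rewrite sqrf_eq0 => /eqP ->.
Qed.

Lemma unitary_rows n (G : 'M[C]_n) : unitary G ->
  (forall c, \sum_a sq (G c a) = 1) /\ (forall a, \sum_c sq (G c a) = 1).
Proof.
move=> [G1 G2]; split.
  move=> c; have := congr1 (fun X : 'M[C]_n => X c c) G1; rewrite !mxE eqxx mulr1n.
  under eq_bigr do rewrite !mxE sqE.
  by rewrite -rmorph_sum => /complexI.
move=> a; have := congr1 (fun X : 'M[C]_n => X a a) G2; rewrite !mxE eqxx mulr1n.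
under eq_bigr do rewrite !mxE mulrC sqE.
by rewrite -rmorph_sum => /complexI.
Qed.

Lemma conj_diag_cc n (G : 'M[C]_n) (b : 'I_n -> R) c :
  (G *m diag_mx (\row_a (b a)%:C) *m adjmx G) c c = (\sum_a sq (G c a) * b a)%:C.
Proof.
rewrite conj_diag_entry rmorph_sum; apply: eq_bigr => a _.
by rewrite !mxE rmorphM /= -sqE; ring.
Qed.

Lemma adjmx_entry m n (A : 'M[C]_(m,n)) x y : adjmx A x y = conjc (A y x).
Proof. by rewrite !mxE. Qed.

Lemma trace_diag n (A : 'M[C]_n) (d : 'I_n -> C) :
  \tr (A *m diag_mx (\row_l d l)) = \sum_c A c c * d c.
Proof. by apply: eq_bigr => c _; rewrite mul_mx_diag !mxE. Qed.

Lemma trace_ptrace2 m n (A : 'M[C]_m) (X : 'M[C]_(m * n)) :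
  \tr (A *m ptrace2 X) = \tr ((A *t (1%:M : 'M[C]_n)) *m X).
Proof.
rewrite /mxtrace sum_tens; apply: eq_bigr => i _.
rewrite !mxE /ptrace2.
under eq_bigr do rewrite mxE mulr_sumr.
rewrite exchange_big /=; apply: eq_bigr => k _.
rewrite !mxE sum_tens; apply: eq_bigr => i' _.
rewrite (bigD1 k) //= big1 ?addr0; last first.
  by move=> k' hk; rewrite tensmxE !mxE eq_sym (negbTE hk) mulr0 mul0r.
by rewrite tensmxE !mxE eqxx mulr1.
Qed.

Lemma ptrace2_tens m n (A : 'M[C]_m) (B : 'M[C]_n) : ptrace2 (A *t B) = \tr B *: A.
Proof.
apply/matrixP => i i'; rewrite /ptrace2 !mxE /mxtrace mulr_suml; apply: eq_bigr => l _.
by rewrite tensmxE mulrC.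
Qed.

Lemma ptrace_basis m n (P : 'M[C]_m) (W : 'M[C]_n) (X : 'M[C]_(m * n)) i i' :
  unitary W ->
  (adjmx P *m ptrace2 X *m P) i i'
  = \sum_k (adjmx (P *t W) *m X *m (P *t W)) (mxtens_index (i, k)) (mxtens_index (i', k)).
Proof.
move=> [W1 W2].
have WW l2 l1 : \sum_k W l2 k * conjc (W l1 k) = (l2 == l1)%:R.
  by have := congr1 (fun Y : 'M[C]_n => Y l2 l1) W1; rewrite !mxE => <-; apply: eq_bigr => k _; rewrite !mxE.
rewrite mxE; under eq_bigr do rewrite mxE mulr_suml.
under [RHS]eq_bigr do rewrite mxE.
rewrite [RHS]exchange_big /= sum_tens; apply: eq_bigr => b _.
rewrite /ptrace2; under eq_bigr do rewrite !mxE mulr_sumr mulr_suml.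
rewrite exchange_big /=; apply: eq_bigr => l2 _.
under [RHS]eq_bigr do rewrite mxE sum_tens mulr_suml.
rewrite [RHS]exchange_big /=; apply: eq_bigr => a _.
under [RHS]eq_bigr do rewrite mulr_suml.
rewrite [RHS]exchange_big /=.
have E l1 x : \sum_k adjmx (P *t W) (mxtens_index (i, k)) (mxtens_index (a, l1)) * x
     * (P *t W) (mxtens_index (b, l2)) (mxtens_index (i', k))
    = conjc (P a i) * x * P b i' * (l2 == l1)%:R.
  rewrite -WW mulr_sumr; apply: eq_bigr => k _.
  by rewrite adjmx_entry !tensmxE rmorphM; ring.
rewrite (bigD1 l2) //= [X in _ = _ + X]big1 ?addr0; last first.
  by move=> l1 hl; rewrite E eq_sym (negbTE hl) mulr0.
by rewrite E eqxx mulr1.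
Qed.

End Q.

Section Q.
Variable R : realType.
Local Notation C := R[i].

Lemma unitary_mul n (A B : 'M[C]_n) : unitary A -> unitary B -> unitary (A *m B).
Proof.
move=> [A1 A2] [B1 B2]; rewrite /unitary adjmxM; split.
  by rewrite mulmxA -[A *m B *m adjmx B]mulmxA B1 mulmx1 A1.
by rewrite mulmxA -[adjmx B *m adjmx A *m A]mulmxA A2 mulmx1 B2.
Qed.

Lemma unitary_adj n (A : 'M[C]_n) : unitary A -> unitary (adjmx A).
Proof. by move=> [A1 A2]; rewrite /unitary adjmxK. Qed.

Lemma flux_trace dS dE (HS : 'M[C]_dS) (HE : 'M[C]_dE) (V : 'M[C]_(dS * dE))
  (tau beta T : R) (rho : 'M[C]_dS) :
  let U := Uint HS HE V tau in
  let B := rho *t gibbs beta HE in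
  let IH := (1%:M : 'M[C]_dS) *t HE in
  \tr (rho *m flux HS HE V tau beta T)
  = - (T%:C)^-1 * (\tr (U *m B *m adjmx U *m IH) - \tr (B *m IH)).
Proof.
move=> U B IH; rewrite /flux -/U -/IH -scalemxAr mxtraceZ trace_ptrace2.
congr (_ * _); rewrite mulmxA tensmx_mul mulmx1 mul1mx -/B mulmxBr raddfB.
congr (_ - _).
transitivity (\tr (U *m (B *m adjmx U *m IH))); last by rewrite !mulmxA.
by rewrite [RHS]mxtrace_mulC !mulmxA.
Qed.

Lemma energy n (Vb U : 'M[C]_n) (bb hh : 'I_n -> R) : unitary Vb ->
  let B := Vb *m diag_mx (\row_c (bb c)%:C) *m adjmx Vb in
  let IH := Vb *m diag_mx (\row_c (hh c)%:C) *m adjmx Vb in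
  let G := adjmx Vb *m U *m Vb in
  \tr (U *m B *m adjmx U *m IH) - \tr (B *m IH)
  = (\sum_c ((\sum_a sq (G c a) * bb a) - bb c) * hh c)%:C.
Proof.
move=> Vu B IH G; have [V1 V2] := Vu.
have E1 : \tr (U *m B *m adjmx U *m IH)
    = \tr ((G *m diag_mx (\row_c (bb c)%:C) *m adjmx G) *m diag_mx (\row_c (hh c)%:C)).
  rewrite /IH !mulmxA mxtrace_mulC !mulmxA; congr (\tr (_ *m _)).
  rewrite /G /B !adjmxM adjmxK !mulmxA.
  by [].
have E2 : \tr (B *m IH) = \sum_c (bb c)%:C * (hh c)%:C.
  rewrite /B /IH conj_mul // mxtrace_mulC mulmxA V2 mul1mx mxtrace_diag.
  by apply: eq_bigr => c _; rewrite !mxE.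
rewrite E1 E2 trace_diag.
under eq_bigr do rewrite conj_diag_cc.
rewrite -sumrB rmorph_sum; apply: eq_bigr => c _.
by rewrite rmorphM rmorphB /= mulrBl.
Qed.

Lemma ptrace_conj_cc m n (P : 'M[C]_m) (W : 'M[C]_n) (U : 'M[C]_(m * n))
  (bb : 'I_(m * n) -> R) i :
  unitary W ->
  let Vb := P *t W in let G := adjmx Vb *m U *m Vb in
  (adjmx P *m ptrace2 (U *m (Vb *m diag_mx (\row_c (bb c)%:C) *m adjmx Vb) *m adjmx U) *m P) i i
  = (\sum_k \sum_a sq (G (mxtens_index (i, k)) a) * bb a)%:C.
Proof.
move=> Wu Vb G; rewrite (ptrace_basis _ _ _ _ Wu) -/Vb.
have EQ : adjmx Vb *m (U *m (Vb *m diag_mx (\row_c (bb c)%:C) *m adjmx Vb) *m adjmx U) *m Vb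
   = G *m diag_mx (\row_c (bb c)%:C) *m adjmx G.
  by rewrite /G !adjmxM adjmxK !mulmxA.
rewrite EQ; under eq_bigr do rewrite conj_diag_cc.
by rewrite rmorph_sum.
Qed.

Lemma diag_comm_mx n (G : 'M[C]_n) (b : 'I_n -> R) :
  (forall c a, 0 < sq (G c a) -> b a = b c) ->
  G *m diag_mx (\row_a (b a)%:C) = diag_mx (\row_a (b a)%:C) *m G.
Proof.
move=> hb; apply/matrixP => c a; rewrite mul_mx_diag mul_diag_mx !mxE.
have [->|nz] := eqVneq (G c a) 0; first by rewrite mulr0 mul0r.
have sp : 0 < sq (G c a).
  rewrite lt_def sq_ge0 andbT; apply/eqP => /sq_eq0 h; by rewrite h eqxx in nz.
by rewrite (hb c a sp) mulrC.
Qed.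

Lemma conj_back n (Vb U G : 'M[C]_n) (bb : 'I_n -> R) : unitary Vb -> unitary U ->
  G = adjmx Vb *m U *m Vb ->
  (forall c a, 0 < sq (G c a) -> bb a = bb c) ->
  U *m (Vb *m diag_mx (\row_c (bb c)%:C) *m adjmx Vb) *m adjmx U
  = Vb *m diag_mx (\row_c (bb c)%:C) *m adjmx Vb.
Proof.
move=> [V1 V2] Uu GE hb.
have Gu : unitary G.
  by rewrite GE; apply: unitary_mul; [apply: unitary_mul => //; exact: unitary_adj|].
have UE : U = Vb *m G *m adjmx Vb.
  by rewrite GE !mulmxA V1 mul1mx -mulmxA V1 mulmx1.
rewrite UE; set D := diag_mx _.
rewrite !adjmxM adjmxK !mulmxA.
rewrite -[Vb *m G *m adjmx Vb *m Vb]mulmxA V2 mulmx1.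
rewrite -[Vb *m G *m D *m adjmx Vb *m Vb]mulmxA V2 mulmx1.
rewrite -[Vb *m G *m D]mulmxA /D (diag_comm_mx hb) mulmxA.
by rewrite -[_ *m G *m adjmx G]mulmxA (proj1 Gu) mulmx1.
Qed.

Lemma trace_conj n (W : 'M[C]_n) (q : 'I_n -> R) : unitary W ->
  \tr (W *m diag_mx (\row_l (q l)%:C) *m adjmx W) = (\sum_l q l)%:C.
Proof.
move=> [_ W2]; rewrite mxtrace_mulC mulmxA W2 mul1mx mxtrace_diag rmorph_sum.
by apply: eq_bigr => l _; rewrite mxE.
Qed.

Lemma psd_diag_ge0 n (rho P : 'M[C]_n) (p : 'I_n -> R) : psdmx rho -> unitary P ->
  rho = P *m diag_mx (\row_l (p l)%:C) *m adjmx P -> forall i, 0 <= p i.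
Proof.
move=> [_ hpsd] [P1 P2] rhoE i.
have := hpsd (col i P).
have -> : (adjmx (col i P) *m rho *m col i P) 0 0 = (adjmx P *m rho *m P) i i.
  rewrite !mxE; apply: eq_bigr => b _; rewrite !mxE; congr (_ * _).
  by apply: eq_bigr => a _; rewrite !mxE.
rewrite rhoE !mulmxA P2 mul1mx -mulmxA P2 mulmx1 !mxE eqxx mulr1n.
by rewrite ler0c.
Qed.

End Q.

Theorem mainTheorem9 (R : realType) (M dS : nat) (dE : 'I_M -> nat)
  (HS : 'M[R[i]]_dS) (HE : forall j, 'M[R[i]]_(dE j))
  (V : forall j, 'M[R[i]]_(dS * dE j)) (tau beta : 'I_M -> R)
  (rho : 'M[R[i]]_dS) :
  (0 < M)%N -> (0 < dS)%N -> (forall j, 0 < dE j)%N ->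
  selfadjoint HS -> (forall j, selfadjoint (HE j)) ->
  (forall j, selfadjoint (V j)) -> (forall j, 0 < tau j) ->
  (* (ER ra): L_ra is primitive for some choice of inverse temperatures *)
  (exists beta' : 'I_M -> R, primitive (Lra HS HE V tau beta')) ->
  (* rho is the (unique) invariant state rho^ra_+ of L_ra *)
  density rho -> Lra HS HE V tau beta rho = rho ->
  let T := \sum_(j < M) tau j in
  let sigma := - \sum_(j < M) (beta j)%:C
                   * \tr (rho *m flux HS (HE j) (V j) (tau j) (beta j) T) in
  let U j := Uint HS (HE j) (V j) (tau j) in
  (sigma = 0 <->
     (forall j, U j *m (rho *t gibbs (beta j) (HE j)) *m adjmx (U j)
                = rho *t gibbs (beta j) (HE j))) /\
  ((forall j, U j *m (rho *t gibbs (beta j) (HE j)) *m adjmx (U j)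
                = rho *t gibbs (beta j) (HE j)) ->
   forall j, Lrep HS (HE j) (V j) (tau j) (beta j) rho = rho).
Proof.
move=> M0 dS0 dE0 hHS hHE hV htau _ [hpsd trrho] Hinv T sigma U.
have Uu j : unitary (U j) by apply: Uint_unitary.
pose W j := spW (HE j).
pose h j := spd (HE j).
pose Z j := \sum_k expR (- beta j * h j k).
pose q j k := expR (- beta j * h j k) / Z j.
have gf j := gibbs_form (beta j) (hHE j).
have Wu j : unitary (W j) by case: (gf j).
have HEE j : HE j = W j *m diag_mx (\row_l (h j l)%:C) *m adjmx (W j) by case: (gf j) => _ [].
have gE j : gibbs (beta j) (HE j) = W j *m diag_mx (\row_l (q j l)%:C) *m adjmx (W j).
  by case: (gf j) => _ [].
have Zp j : 0 < Z j.
  rewrite /Z (bigD1 (Ordinal (dE0 j))) //=; apply: ltr_pwDl; first exact: expR_gt0.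
  by apply: sumr_ge0 => k _; apply/ltW; exact: expR_gt0.
have qp j k : 0 < q j k by rewrite /q divr_gt0 // expR_gt0.
have q1 j : \sum_k q j k = 1 by rewrite /q -mulr_suml -/(Z j) divff // gt_eqF.
have trg j : \tr (gibbs (beta j) (HE j)) = 1 by rewrite gE trace_conj // q1.
have Bt j : Lrep HS (HE j) (V j) (tau j) (beta j) rho
   = ptrace2 (U j *m (rho *t gibbs (beta j) (HE j)) *m adjmx (U j)) by [].
have flux0 j : U j *m (rho *t gibbs (beta j) (HE j)) *m adjmx (U j) = rho *t gibbs (beta j) (HE j) ->
   \tr (rho *m flux HS (HE j) (V j) (tau j) (beta j) T) = 0.
  by move=> E; rewrite flux_trace -/(U j) E subrr mulr0.
split; last by move=> H j; rewrite Bt H ptrace2_tens trg scale1r.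
split; last first.
  move=> H; rewrite /sigma big1 ?oppr0 // => j _; by rewrite flux0 ?mulr0.
move=> Hs.
have [Pu rhoE] := spectral_herm_ex hpsd.1.
move: Pu rhoE; set P := spW rho; set p := spd rho => Pu rhoE.
have p0 : forall i, 0 <= p i := psd_diag_ge0 hpsd Pu rhoE.
pose Vb j := P *t W j.
have Vu j : unitary (Vb j) := unitary_tens Pu (Wu j).
pose bb j (c : 'I_(dS * dE j)) := p (mxtens_unindex c).1 * q j (mxtens_unindex c).2.
have BE j : rho *t gibbs (beta j) (HE j) = Vb j *m diag_mx (\row_c (bb j c)%:C) *m adjmx (Vb j).
  rewrite {1}rhoE gE tens_conj; congr (_ *m diag_mx _ *m _); apply/rowP => c.
  by rewrite !mxE /bb /q !rmorphM.
pose G j := adjmx (Vb j) *m U j *m Vb j.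
have Gu j : unitary (G j).
  by apply: unitary_mul; [apply: unitary_mul => //; exact: unitary_adj|].
pose gg j c a := sq (G j c a).
have IHE j : (1%:M : 'M[R[i]]_dS) *t HE j
    = Vb j *m diag_mx (\row_c (h j (mxtens_unindex c).2)%:C) *m adjmx (Vb j).
  rewrite {1}(HEE j) -(@conj_one _ _ P (fun _ => 1) Pu (fun _ => erefl)) tens_conj.
  by congr (_ *m diag_mx _ *m _); apply/rowP => c; rewrite !mxE mul1r.
pose dEn j := \sum_c ((\sum_a gg j c a * bb j a) - bb j c) * h j (mxtens_unindex c).2.
have trE j : \tr (rho *m flux HS (HE j) (V j) (tau j) (beta j) T) = - (T%:C)^-1 * (dEn j)%:C.
  rewrite flux_trace -/(U j) IHE BE.
  have := energy (U j) (bb j) (fun c => h j (mxtens_unindex c).2) (Vu j).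
  by cbv zeta => ->.
have Tp : 0 < T.
  rewrite /T (bigD1 (Ordinal M0)) //=; apply: ltr_pwDl; first exact: htau.
  by apply: sumr_ge0 => k _; apply/ltW; exact: htau.
have sigE : sigma = (T^-1 * \sum_j beta j * dEn j)%:C.
  rewrite /sigma; under eq_bigr do rewrite trE.
  rewrite mulr_sumr [RHS]rmorph_sum -sumrN; apply: eq_bigr => j _.
  rewrite !rmorphM fmorphV /=; ring.
have S0 : \sum_j beta j * dEn j = 0.
  move: Hs; rewrite sigE => /complexI /eqP; rewrite mulf_eq0 invr_eq0 gt_eqF //=.
  by move/eqP.
have Lsum : \sum_j Lrep HS (HE j) (V j) (tau j) (beta j) rho = M%:R *: rho.
  move: Hinv; rewrite /Lra => {2}<-; rewrite scalerA divff ?scale1r //.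
  by rewrite pnatr_eq0 -lt0n.
have Hsum i : \sum_j \sum_k (\sum_a gg j (mxtens_index (i, k)) a * bb j a) = M%:R * p i.
  apply: complexI.
  have HH := congr1 (fun X : 'M[R[i]]_dS => (adjmx P *m X *m P) i i) Lsum.
  rewrite /= mulmx_sumr mulmx_suml summxE in HH.
  have RE : (adjmx P *m (M%:R *: rho) *m P) i i = (M%:R * p i)%:C.
    rewrite -scalemxAr -scalemxAl mxE {1}rhoE !mulmxA (proj2 Pu) mul1mx.
    rewrite -mulmxA (proj2 Pu) mulmx1 !mxE eqxx mulr1n rmorphM /=.
    by rewrite rmorph_nat.
  rewrite [LHS]rmorph_sum -RE -HH; apply: eq_bigr => j _.
  rewrite Bt BE.
  have := @ptrace_conj_cc _ _ _ P (W j) (U j) (bb j) i (Wu j).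
  by cbv zeta => ->.
have lnq j k : beta j * h j k = - ln (q j k) - ln (Z j).
  rewrite /q ln_div ?posrE ?expR_gt0 // expRK; ring.
have hcore := @core R M dS dE p q Z beta h gg p0 qp q1 lnq
  (fun j c a => sq_ge0 _) (fun j => (unitary_rows (Gu j)).1)
  (fun j => (unitary_rows (Gu j)).2) Hsum S0.
move=> j; rewrite BE; apply: conj_back (Vu j) (Uu j) (erefl _) _.
exact: hcore.
Qed.
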